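(* Let $I\subseteq\mathbb{R}$ be an interval, $p\in\mathbb{N}$, $\mathbf{d}=(d_1,\dots,d_p)\in\mathbb{N}^p$, $\alpha\in\mathbb{N}_p^{\mathbf{d}}$, and let $\mathbf{M}=(M_1,\dots,M_p)$ be a $\mathbf{d}$-averaging mapping on $I$. Assume that the root graph $\mathcal{R}(G_\alpha)$ is ergodic and that each $M_i$ ($i\in\{1,\dots,p\}$) is continuous and strict. Then there exists a unique continuous $\mathbf{M}_\alpha$-invariant mean $K_\alpha\colon I^p\to I$ such that $$\lim_{n\to\infty}\mathbf{M}_\alpha^n=\mathbf{K}_\alpha\quad\text{pointwise on } I^p,$$ where $\mathbf{K}_\alpha\colon I^p\to I^p$, $\mathbf{K}_\alpha=(K_\alpha,\dots,K_\alpha)$, and $K_\alpha$ depends only on the root coordinates: there exists a mean $K_\alpha^*\colon I^{|R(G_\alpha)|}\to I$ such that $K_\alpha(x_1,\dots,x_p)=K^*_\alpha(x_i: i\in R(G_\alpha))$ for all $(x_1,\dots,x_p)\in I^p$.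
   Context: A $k$-variable mean on an interval $I$ is a function $M\colon I^k\to I$ with $\min(x)\le M(x)\le\max(x)$ for all $x\in I^k$; it is strict if both inequalities are strict for every nonconstant $x$. A mean-type mapping is $\mathbf{M}=(M_1,\dots,M_p)\colon I^p\to I^p$ with each $M_i$ a $p$-variable mean; a function $K\colon I^p\to I$ is $\mathbf{M}$-invariant if $K\circ\mathbf{M}=K$. $\mathbf{M}^n$ denotes the $n$-th iterate. Notation: $\mathbb{N}=\{1,2,\dots\}$, $\mathbb{N}_p=\{1,\dots,p\}$, $\mathbb{N}_p^{\mathbf{d}}=\mathbb{N}_p^{d_1}\times\dots\times\mathbb{N}_p^{d_p}$. A $\mathbf{d}$-averaging mapping on $I$ is a sequence $\mathbf{M}=(M_1,\dots,M_p)$ where each $M_i$ is a $d_i$-variable mean on $I$. For $\alpha=(\alpha_1,\dots,\alpha_p)\in\mathbb{N}_p^{\mathbf{d}}$, $\alpha_i=(\alpha_{i,1},\dots,\alpha_{i,d_i})$, define $\mathbf{M}_\alpha\colon I^p\to I^p$ by $\mathbf{M}_\alpha(x_1,\dots,x_p)=\big(M_i(x_{\alpha_{i,1}},\dots,x_{\alpha_{i,d_i}})\big)_{i=1}^p$. The $\alpha$-incidence graph is the digraph $G_\alpha=(\mathbb{N}_p,E_\alpha)$ with $E_\alpha=\{(\alpha_{i,j},i): i\in\mathbb{N}_p,\ j\in\mathbb{N}_{d_i}\}$. Graph notions: a walk is a sequence $(v_0,\dots,v_n)$ with consecutive pairs being edges; $v\leadsto w$ if a walk from $v$ to $w$ exists;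 a digraph is irreducible if $v\leadsto w$ for all vertices $v,w$; a cycle is a nonempty walk whose only repeated vertices are the first and last; a digraph is aperiodic if no integer $k>1$ divides the length of every cycle; ergodic means nonempty, irreducible and aperiodic. The root $R(G)$ of a digraph $G=(V,E)$ is the union of those strongly connected components (classes of $v\sim w\iff v\leadsto w$ and $w\leadsto v$) that receive no edge from a vertex in a different component; the root graph is $\mathcal{R}(G)=(R(G),E\cap(R(G)\times R(G)))$. *)

(* Defs.v *)
From HB Require Import structures.
From mathcomp Require Import all_boot all_order all_algebra.
From mathcomp Require Import all_classical all_reals all_analysis.
Set Implicit Arguments. Unset Strict Implicit. Unset Printing Implicit Defensive.
Import Order.TTheory GRing.Theory Num.Theory.
Import numFieldNormedType.Exports.
Local Open Scope classical_set_scope.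
Local Open Scope ring_scope.

(** Points of R^k are row vectors 'rV[R]_k; the j-th coordinate of x is x ord0 j. *)

Definition cube {R : realType} (I : set R) (k : nat) : set 'rV[R]_k :=
  [set x | forall j : 'I_k, I (x ord0 j)].
Arguments cube {R} I k.

(** min(x) <= y  <->  some coordinate is <= y;  y <= max(x) <-> some coordinate is >= y *)
Definition is_mean {R : realType} (I : set R) (k : nat) (M : 'rV[R]_k -> R) : Prop :=
  forall x, cube I k x ->
    I (M x) /\ (exists j, x ord0 j <= M x) /\ (exists j, M x <= x ord0 j).

Definition nonconstant {R : realType} (k : nat) (x : 'rV[R]_k) : Prop :=
  exists j j', x ord0 j != x ord0 j'.

Definition is_strict_mean {R : realType} (I : set R) (k : nat) (M : 'rV[R]_k -> R) : Prop :=
  is_mean I M /\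
  forall x, cube I k x -> nonconstant x ->
    (exists j, x ord0 j < M x) /\ (exists j, M x < x ord0 j).

Definition Malpha {R : realType} (p : nat) (d : 'I_p -> nat)
  (alpha : forall i : 'I_p, 'I_(d i) -> 'I_p)
  (M : forall i : 'I_p, 'rV[R]_(d i) -> R) (x : 'rV[R]_p) : 'rV[R]_p :=
  \row_(i < p) M i (\row_(j < d i) x ord0 (alpha i j)).

Definition inc_edge (p : nat) (d : 'I_p -> nat)
  (alpha : forall i : 'I_p, 'I_(d i) -> 'I_p) : rel 'I_p :=
  fun u v => [exists j : 'I_(d v), alpha v j == u].

Definition scc {T : finType} (e : rel T) (v w : T) : bool :=
  connect e v w && connect e w v.

(** root: union of the components receiving no edge from a different component *)
Definition root_set {T : finType} (e : rel T) : {set T} :=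
  [set v | [forall u, forall w, (scc e u v && e w u) ==> scc e w v]].

Definition induced {T : finType} (e : rel T) (S : {set T}) : rel T :=
  fun u v => [&& u \in S, v \in S & e u v].

Definition irreducible_on {T : finType} (e : rel T) (S : {set T}) : Prop :=
  forall v w, v \in S -> w \in S -> connect e v w.

(** a cycle of length n: walk (v, s_1, ..., s_n) with s_n = v, n >= 1,
    and no repeated vertex except first = last *)
Definition is_cycle {T : finType} (e : rel T) (v : T) (s : seq T) : bool :=
  [&& path e v s, last v s == v, uniq s & (0 < size s)%N].

Definition aperiodic {T : finType} (e : rel T) : Prop :=
  ~ exists k : nat, (1 < k)%N /\
      forall v s, is_cycle e v s -> (k %| size s)%N.

Definition ergodic_on {T : finType} (e : rel T) (S : {set T}) : Prop :=
  S != finset.set0 /\ irreducible_on (induced e S) S /\ aperiodic (induced e S).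

(* Main.v *)
Require Import Defs.
From HB Require Import structures.
From mathcomp Require Import all_boot all_order all_algebra.
From mathcomp Require Import all_classical all_reals all_analysis.
From mathcomp Require Import zify ring lra.
Import Order.TTheory GRing.Theory Num.Theory.
Import numFieldNormedType.Exports.
Set Implicit Arguments. Unset Strict Implicit. Unset Printing Implicit Defensive.

Lemma semigroup_mul (P : nat -> Prop) :
  (P 0%N) -> (forall a b, P a -> P b -> P (a + b)%N) ->
  forall m a, P a -> P (m * a)%N.
Proof.
move=> P0 PD; elim=> [|m IH] a Pa; first by rewrite mul0n.
by rewrite mulSn; apply: PD => //; apply: IH.
Qed.

Lemma semigroup_large (P : nat -> Prop) :
  (P 0%N) -> (forall a b, P a -> P b -> P (a + b)%N) ->
  (forall k, (1 < k)%N -> exists l, P l /\ ~~ (k %| l)%N) ->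
  exists N, forall n, (N <= n)%N -> P n.
Proof.
move=> P0 PD Hk.
have PM := @semigroup_mul P P0 PD.
suff main : forall g, (0 < g)%N -> (exists N, forall m, (N <= m)%N -> P (m * g)%N) ->
    exists N, forall n, (N <= n)%N -> P n.
  have [l [Pl Hl]] := Hk 2%N isT.
  have l0 : (0 < l)%N by case: l Pl Hl.
  by apply: (main l l0); exists 0%N => m _; apply: PM.
elim/ltn_ind => g IH g0 [N HN].
have [g1|g1] := leqP g 1%N.
  have g1' : g = 1%N by lia.
  by exists N => n Hn; have := HN n Hn; rewrite g1' muln1.
have [l [Pl Hl]] := Hk g g1.
set g' := gcdn g l.
have g'0 : (0 < g')%N by rewrite gcdn_gt0 g0.
have g'g : (g' < g)%N.
  rewrite ltn_neqAle dvdn_leq ?dvdn_gcdl // andbT.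
  apply/eqP => E; move: Hl; rewrite -E /g' dvdn_gcdr //.
apply: (IH g' g'g g'0).
have [a _ Ha] := Bezoutl l g0.
move: Ha => /dvdnP [c Hc].
(* c * g = g' + a * l *)
set B := (a * l + N * g)%N.
set A := ((c + N) * g)%N.
have PB : P B by apply: PD; [apply: PM | apply: HN].
have PA : P A by apply: HN; lia.
have AB : A = (B + g')%N by rewrite /A /B mulnDl -Hc; lia.
have dB : (g' %| B)%N.
  by rewrite dvdn_add // ?dvdn_mull // /g' ?dvdn_gcdr ?dvdn_gcdl.
move: dB => /dvdnP [beta Hbeta].
have [b0|b0] := posnP beta.
  exists 0%N => m _; apply: PM.
  by rewrite -[g']add0n -(mul0n g') -b0 -Hbeta -AB.
exists (beta * beta)%N => m Hm.
set q := (m %/ beta)%N; set r := (m %% beta)%N.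
have Hm' : m = (q * beta + r)%N by rewrite /q /r -divn_eq.
have rb : (r < beta)%N by rewrite /r ltn_mod.
have qb : (beta <= q)%N by rewrite /q leq_divRL.
have -> : (m * g' = (q - r) * B + r * A)%N.
  rewrite AB Hbeta Hm'.
  have -> : q = (r + (q - r))%N by lia.
  set s := (q - r)%N. rewrite [(r + s - r)%N]addKn. nia.
by apply: PD; apply: PM.
Qed.

Fixpoint walk {T : finType} (e : rel T) (n : nat) (x y : T) : bool :=
  if n is n'.+1 then [exists u, e x u && walk e n' u y] else x == y.

Lemma walk_cat (T : finType) (e : rel T) m n x y z :
  walk e m x y -> walk e n y z -> walk e (m + n) x z.
Proof.
elim: m x => [|m IH] x /=; first by move/eqP ->.
move=> /existsP [u /andP [exu wu]] wyz; apply/existsP; exists u.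
by rewrite exu (IH _ wu wyz).
Qed.

Lemma walk_sub (T : finType) (e e' : rel T) n x y :
  subrel e e' -> walk e n x y -> walk e' n x y.
Proof.
move=> see'; elim: n x => [|n IH] x //= /existsP [u /andP [exu wu]].
by apply/existsP; exists u; rewrite (see' _ _ exu) (IH _ wu).
Qed.

Lemma path_walk (T : finType) (e : rel T) x s :
  path e x s -> walk e (size s) x (last x s).
Proof.
elim: s x => [|u s IH] x /=; first by rewrite eqxx.
move=> /andP [exu pu]; apply/existsP; exists u; by rewrite exu IH.
Qed.

Lemma connect_walk (T : finType) (e : rel T) x y :
  connect e x y -> exists n, walk e n x y.
Proof.
by move=> /connectP [s ps ->]; exists (size s); apply: path_walk.
Qed.

Lemma walk_connect (T : finType) (e : rel T) n x y :
  walk e n x y -> connect e x y.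
Proof.
elim: n x => [|n IH] x /=; first by move/eqP ->.
move=> /existsP [u /andP [exu wu]].
exact: connect_trans (connect1 exu) (IH _ wu).
Qed.

Lemma scc_trans (T : finType) (e : rel T) x y z :
  scc e x y -> scc e y z -> scc e x z.
Proof.
move=> /andP [a b] /andP [c d]; apply/andP; split.
  exact: connect_trans a c.
exact: connect_trans d b.
Qed.

Lemma scc_sym (T : finType) (e : rel T) x y : scc e x y -> scc e y x.
Proof. by move=> /andP [a b]; apply/andP. Qed.

Lemma root_closed (T : finType) (e : rel T) u v :
  e u v -> v \in root_set e -> u \in root_set e.
Proof.
move=> euv; rewrite !inE => /forallP Hv.
have suv : scc e u v.
  have := Hv v => /forallP /(_ u) /implyP; apply.
  by rewrite /scc connect0 euv.
apply/forallP => u'; apply/forallP => w; apply/implyP => /andP [su'u ewu'].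
have su'v := scc_trans su'u suv.
have swv : scc e w v.
  by have := Hv u' => /forallP /(_ w) /implyP; apply; rewrite su'v.
exact: scc_trans swv (scc_sym suv).
Qed.

Lemma root_ancestor (T : finType) (e : rel T) i :
  exists2 s, s \in root_set e & connect e s i.
Proof.
pose anc (w : T) := [set u | connect e u w].
have Xi : i \in [pred w | connect e w i] by rewrite inE connect0.
case: (arg_minnP (fun w => #|anc w|) Xi) => w Xw Hmin.
exists w => //.
rewrite inE; apply/forallP => u; apply/forallP => w'; apply/implyP.
move=> /andP [/andP [cuw cwu] ew'u].
have cw'w : connect e w' w := connect_trans (connect1 ew'u) cuw.
have Xw' : w' \in [pred w | connect e w i].
  by rewrite inE (connect_trans cw'w).
have sub : anc w' \subset anc w.
  by apply/fintype.subsetP => z; rewrite !inE => czw'; apply: connect_trans czw' cw'w.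
have le := Hmin w' Xw'.
have [_ E] := subset_leqif_card sub.
have : anc w \subset anc w'.
  by rewrite -E eqn_leq le (subset_leq_card sub).
move/fintype.subsetP/(_ w); rewrite !inE connect0 => /(_ isT) cww'.
by rewrite /scc cw'w cww'.
Qed.

Lemma induced_sub (T : finType) (e : rel T) S : subrel (Defs.induced e S) e.
Proof. by move=> x y /and3P []. Qed.

Lemma root_walk (T : finType) (e : rel T) :
  ergodic_on e (root_set e) ->
  exists r0, exists K, r0 \in root_set e /\ forall i, walk e K r0 i.
Proof.
case=> [Sne [Hirr Hap]]; set S := root_set e.
have [v vS] := set0Pn _ Sne.
pose eS := Defs.induced e S.
pose P n := walk eS n v v.
have P0 : P 0%N by rewrite /P /= eqxx.
have PD : forall a b, P a -> P b -> P (a + b)%N by move=> a b; apply: walk_cat.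
have Hk : forall k, (1 < k)%N -> exists l, P l /\ ~~ (k %| l)%N.
  move=> k k1; case: (pselect (exists l, P l /\ ~~ (k %| l)%N)) => // H.
  exfalso; apply: Hap; exists k; split => // v' s /and4P [ps /eqP ls _ sz].
  have Hl : forall l, P l -> (k %| l)%N.
    by move=> l Pl; apply/negP => nd; apply: H; exists l; split => //; apply/negP.
  have v'S : v' \in S.
    by case: s ps sz {ls} => [|u s] //= /andP [/and3P [] ].
  have [a wa] := connect_walk (Hirr v v' vS v'S).
  have [b wb] := connect_walk (Hirr v' v v'S vS).
  have Pab : P (a + b)%N by apply: walk_cat wa wb.
  have wc := path_walk ps; rewrite ls in wc.
  have Pasb : P (a + (size s + b))%N by apply: walk_cat wa (walk_cat wc wb).
  have := Hl _ Pasb; rewrite addnCA dvdn_addl //; exact: Hl.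
have [N HN] := semigroup_large P0 PD Hk.
have Hc : forall i, exists n, walk e n v i.
  move=> i; have [s sS csi] := root_ancestor e i.
  apply: connect_walk; apply: connect_trans _ csi.
  apply: (connect_sub _ (Hirr v s vS sS)) => x y exy.
  by apply: connect1; apply: induced_sub exy.
have [b Hb] := boolp.choice Hc.
exists v, (N + \max_(i : T) b i)%N; split => // i.
have bi : (b i <= \max_(j : T) b j)%N by apply: leq_bigmax.
have HP : P (N + \max_(j : T) b j - b i)%N by apply: HN; lia.
have := walk_cat (walk_sub (@induced_sub T e S) HP) (Hb i).
by rewrite subnK //; lia.
Qed.

Local Open Scope classical_set_scope.
Local Open Scope ring_scope.

Lemma cvg_rowP (R : realType) (X : Type) (F : set_system X) (FF : Filter F) (p : nat)
  (f : X -> 'rV[R]_p) (l : 'rV[R]_p) :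
  (forall j, (fun t => f t ord0 j) @ F --> l ord0 j) -> f @ F --> l.
Proof.
move=> H; apply/cvg_ballP => e e0.
have H2 : forall j, \forall t \near F, ball (l ord0 j) e (f t ord0 j).
  by move=> j; move/cvg_ballP: (H j) => /(_ e e0).
have H3 := filter_forall FF H2. apply: filterS H3 => t Ht. rewrite /ball /=. split => // i j.
by rewrite (ord1 i); apply: Ht.
Qed.

Lemma vmax_ex (R : realType) (p : nat) (v : 'I_p.+1 -> R) : exists i, forall j, v j <= v i.
Proof.
by case: (@arg_maxP _ _ _ ord0 xpredT v isT) => i _ Hi; exists i => j; apply: Hi.
Qed.

Lemma coord_cvg (R : realType) (p : nat) (z : 'rV[R]_p) i :
  (fun y : 'rV[R]_p => y ord0 i) @ nbhs z --> z ord0 i.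
Proof.
apply/cvg_ballP => e e0.
have H : \forall y \near nbhs z, ball z e y.
  by move/cvg_ballP: (@cvg_id _ (nbhs z)) => /(_ e e0).
by apply: filterS H => y [_ Hy]; apply: Hy.
Qed.

Definition vmax {R : realType} {p : nat} (v : 'rV[R]_p.+1) :=
  v ord0 (Order.arg_max ord0 xpredT (fun i => v ord0 i)).
Definition vmin {R : realType} {p : nat} (v : 'rV[R]_p.+1) :=
  v ord0 (Order.arg_min ord0 xpredT (fun i => v ord0 i)).

Lemma vmax_ge (R : realType) p (v : 'rV[R]_p.+1) j : v ord0 j <= vmax v.
Proof. by rewrite /vmax; case: arg_maxP => // i _ H; apply: H. Qed.
Lemma vmin_le (R : realType) p (v : 'rV[R]_p.+1) j : vmin v <= v ord0 j.
Proof. by rewrite /vmin; case: arg_minP => // i _ H; apply: H. Qed.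

Record good (R : realType) (I : set R) (p : nat)
  (F : 'rV[R]_p.+1 -> 'rV[R]_p.+1) (e : rel 'I_p.+1) : Prop := Good {
  g_int : is_interval I;
  g_cube : forall z, cube I p.+1 z -> cube I p.+1 (F z);
  g_mean : forall z i, cube I p.+1 z ->
    (exists j, F z ord0 i <= z ord0 j) /\ (exists j, z ord0 j <= F z ord0 i);
  g_up : forall z b i, cube I p.+1 z -> (forall j, z ord0 j <= b) ->
    F z ord0 i = b -> forall j, e j i -> z ord0 j = b;
  g_lo : forall z b i, cube I p.+1 z -> (forall j, b <= z ord0 j) ->
    F z ord0 i = b -> forall j, e j i -> z ord0 j = b;
  g_cont : forall i z, cube I p.+1 z ->
    (fun y => F y ord0 i) @ within (cube I p.+1) (nbhs z) --> F z ord0 i;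
  g_walk : exists r0, exists K, forall i, walk e K r0 i }.


Lemma it_cube (R : realType) I p F e (G : @good R I p F e) n x :
  cube I p.+1 x -> cube I p.+1 (iter n F x).
Proof. by move=> cx; elim: n => //= n IH; apply: (g_cube G). Qed.

Lemma vmax_F (R : realType) I p F e (G : @good R I p F e) z :
  cube I p.+1 z -> vmax (F z) <= vmax z.
Proof.
move=> cz; have [[j Hj] _] := g_mean G (Order.arg_max ord0 xpredT (fun i => F z ord0 i)) cz.
exact: le_trans Hj (vmax_ge _ _).
Qed.

Lemma vmin_F (R : realType) I p F e (G : @good R I p F e) z :
  cube I p.+1 z -> vmin z <= vmin (F z).
Proof.
move=> cz; have [_ [j Hj]] := g_mean G (Order.arg_min ord0 xpredT (fun i => F z ord0 i)) cz.
exact: le_trans (vmin_le _ _) Hj.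
Qed.

Lemma F_le (R : realType) I p F e (G : @good R I p F e) z b :
  cube I p.+1 z -> (forall j, z ord0 j <= b) -> forall j, F z ord0 j <= b.
Proof.
by move=> cz Hb i; have [[j Hj] _] := g_mean G i cz; apply: le_trans Hj (Hb j).
Qed.

Lemma F_ge (R : realType) I p F e (G : @good R I p F e) z b :
  cube I p.+1 z -> (forall j, b <= z ord0 j) -> forall j, b <= F z ord0 j.
Proof.
by move=> cz Hb i; have [_ [j Hj]] := g_mean G i cz; apply: le_trans (Hb j) Hj.
Qed.

Lemma walk_up (R : realType) I p F e (G : @good R I p F e) K :
  forall z b i, cube I p.+1 z -> (forall j, z ord0 j <= b) ->
  iter K F z ord0 i = b -> forall j, walk e K j i -> z ord0 j = b.
Proof.
elim: K => [|K IH] z b i cz Hb Hi j /=.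
  by move/eqP => ->.
move=> /existsP [u /andP [eju wu]].
rewrite iterSr in Hi.
have Fu := IH (F z) b i (g_cube G cz) (F_le G cz Hb) Hi u wu.
exact: (g_up G cz Hb Fu eju).
Qed.

Lemma walk_lo (R : realType) I p F e (G : @good R I p F e) K :
  forall z b i, cube I p.+1 z -> (forall j, b <= z ord0 j) ->
  iter K F z ord0 i = b -> forall j, walk e K j i -> z ord0 j = b.
Proof.
elim: K => [|K IH] z b i cz Hb Hi j /=.
  by move/eqP => ->.
move=> /existsP [u /andP [eju wu]].
rewrite iterSr in Hi.
have Fu := IH (F z) b i (g_cube G cz) (F_ge G cz Hb) Hi u wu.
exact: (g_lo G cz Hb Fu eju).
Qed.

Lemma cont_iter (R : realType) I p F e (G : @good R I p F e) k :
  forall i z, cube I p.+1 z ->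
  (fun y => iter k F y ord0 i) @ within (cube I p.+1) (nbhs z) --> iter k F z ord0 i.
Proof.
elim: k => [|k IH] i z cz.
  by apply: cvg_within_filter; apply: coord_cvg.
have IHv : (iter k F) @ within (cube I p.+1) (nbhs z) --> iter k F z.
  by apply: cvg_rowP => j; apply: IH.
have Hw : (iter k F) @ within (cube I p.+1) (nbhs z) -->
          within (cube I p.+1) (nbhs (iter k F z)).
  move=> B HB; have H1 := IHv _ HB.
  have H2 : \forall y \near within (cube I p.+1) (nbhs z), cube I p.+1 (iter k F y).
    by apply: filterS (withinT _ _) => y; apply: (it_cube G).
  by apply: filterS2 H2 H1 => y c h; apply: h c.
have Hc := g_cont G (i:=i) (it_cube G k cz).
rewrite /=.
exact: cvg_trans (cvg_app (fun y => F y ord0 i) Hw) Hc.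
Qed.

Definition Useq {R : realType} {p} (F : 'rV[R]_p.+1 -> 'rV[R]_p.+1) x n := vmax (iter n F x).
Definition Lseq {R : realType} {p} (F : 'rV[R]_p.+1 -> 'rV[R]_p.+1) x n := vmin (iter n F x).

Lemma U_noninc (R : realType) I p F e (G : @good R I p F e) x :
  cube I p.+1 x -> nonincreasing_seq (Useq F x).
Proof.
move=> cx; apply/nonincreasing_seqP => n; rewrite /Useq iterS.
by apply: (vmax_F G); apply: (it_cube G).
Qed.

Lemma L_nondec (R : realType) I p F e (G : @good R I p F e) x :
  cube I p.+1 x -> nondecreasing_seq (Lseq F x).
Proof.
move=> cx; apply/nondecreasing_seqP => n; rewrite /Lseq iterS.
by apply: (vmin_F G); apply: (it_cube G).
Qed.

Lemma vmin_vmax (R : realType) p (v : 'rV[R]_p.+1) : vmin v <= vmax v.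
Proof. exact: le_trans (vmin_le v ord0) (vmax_ge v ord0). Qed.

Lemma test (R : realType) I p F e (G : @good R I p F e) x :
  cube I p.+1 x -> cvgn (Useq F x).
Proof.
move=> cx; apply/cvg_ex; eexists; apply: nonincreasing_cvgn; first exact: (U_noninc G cx).
exists (vmin x) => _ [n _ <-].
apply: le_trans (vmin_vmax _).
have := (L_nondec G cx); rewrite /Lseq => /(_ 0%N n (leq0n n)) //.
Qed.

Lemma main_cvg (R : realType) I p F e (G : @good R I p F e) x :
  cube I p.+1 x ->
  [/\ forall n, Lseq F x n <= limn (Useq F x) <= Useq F x n,
      Useq F x @ \oo --> limn (Useq F x),
      Lseq F x @ \oo --> limn (Useq F x)
    & forall i, (fun n => iter n F x ord0 i) @ \oo --> limn (Useq F x)].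
Proof.
move=> cx.
have Unc := U_noninc G cx; have Lnd := L_nondec G cx.
have U0 : forall n, vmin x <= Useq F x n.
  move=> n; apply: le_trans (vmin_vmax _).
  by have := Lnd 0%N n (leq0n n); rewrite /Lseq.
have L0 : forall n, Lseq F x n <= vmax x.
  move=> n; apply: le_trans (vmin_vmax _) _.
  by have := Unc 0%N n (leq0n n); rewrite /Useq.
have cU : cvgn (Useq F x).
  apply/cvg_ex; eexists; apply: nonincreasing_cvgn => //.
  by exists (vmin x) => _ [n _ <-].
have cL : cvgn (Lseq F x).
  apply/cvg_ex; eexists; apply: nondecreasing_cvgn => //.
  by exists (vmax x) => _ [n _ <-].
set Us := limn (Useq F x); set Ls := limn (Lseq F x).
have HU : Useq F x @ \oo --> Us by [].
have HL : Lseq F x @ \oo --> Ls by [].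
have UsU : forall n, Us <= Useq F x n by apply: nonincreasing_cvgn_ge.
have LsL : forall n, Lseq F x n <= Ls by apply: nondecreasing_cvgn_le.
have itb : forall n i, vmin x <= iter n F x ord0 i <= vmax x.
  move=> n i; apply/andP; split.
    exact: le_trans (Lnd 0%N n (leq0n n)) (vmin_le _ _).
  exact: le_trans (vmax_ge _ _) (Unc 0%N n (leq0n n)).
pose C := [set v : 'rV[R]_p.+1 | forall i, [set` `[vmin x, vmax x]] (v ord0 i)].
have cC : compact C.
  by apply: (@rV_compact _ p.+1 (fun _ => [set` `[vmin x, vmax x]])) => i; apply: segment_compact.
have GC : ((fun n => iter n F x) @ \oo) C.
  have H : \forall n \near \oo, C (iter n F x).
    by apply: filterE => n i /=; rewrite in_itv /=; apply: itb.
  exact: H.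
have [z [Cz clz]] := cC _ _ GC.
have cz : cube I p.+1 z.
  move=> i; have := Cz i; rewrite /= in_itv /= => ab.
  apply: (g_int G _ _ ab); rewrite /vmin /vmax; apply: cx.
have itD : forall k n, iter k F (iter n F x) = iter (k + n) F x.
  by move=> k n; rewrite iterD.
have Ha : forall k i, iter k F z ord0 i <= Us.
  move=> k i; rewrite leNgt; apply/negP => H.
  set w := iter k F z ord0 i.
  have [t1 t2] := midf_lt H.
  set t := (Us + w) / 2 in t1 t2.
  have nB : \forall y \near within (cube I p.+1) (nbhs z), t < iter k F y ord0 i.
    exact: (cvgr_gt _ (@cont_iter _ _ _ _ _ G k i z cz)).
  have nA : \forall n \near \oo, Useq F x n < t.
    exact: (cvgr_lt _ HU).
  have GA : ((fun n => iter n F x) @ \oo) (fun y => cube I p.+1 y /\ iter k F y ord0 i < t).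
    apply: filterS nA => n Hn; split; first exact: (it_cube G n cx).
    rewrite itD; apply: le_lt_trans Hn.
    apply: le_trans (vmax_ge _ i) _.
    exact: (Unc n (k + n)%N (leq_addl _ _)).
  have [y [[cy Ay] By]] := clz _ _ GA nB.
  by have := lt_trans (By cy) Ay; rewrite ltxx.
have Hb : forall k i, Ls <= iter k F z ord0 i.
  move=> k i; rewrite leNgt; apply/negP => H.
  set w := iter k F z ord0 i.
  have [t1 t2] := midf_lt H.
  set t := (w + Ls) / 2 in t1 t2.
  have nB : \forall y \near within (cube I p.+1) (nbhs z), iter k F y ord0 i < t.
    exact: (cvgr_lt _ (@cont_iter _ _ _ _ _ G k i z cz)).
  have nA : \forall n \near \oo, t < Lseq F x n.
    exact: (cvgr_gt _ HL).
  have GA : ((fun n => iter n F x) @ \oo) (fun y => cube I p.+1 y /\ t < iter k F y ord0 i).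
    apply: filterS nA => n Hn; split; first exact: (it_cube G n cx).
    rewrite itD; apply: lt_le_trans Hn _.
    apply: le_trans _ (vmin_le _ i).
    exact: (Lnd n (k + n)%N (leq_addl _ _)).
  have [y [[cy Ay] By]] := clz _ _ GA nB.
  by have := lt_trans (By cy) Ay; rewrite ltxx.
have Hc : forall k, exists i, Us <= iter k F z ord0 i.
  move=> k; case: (pselect (exists i, Us <= iter k F z ord0 i)) => // Hn; exfalso.
  have Hlt : forall i, iter k F z ord0 i < Us.
    by move=> i; rewrite ltNge; apply/negP => H; apply: Hn; exists i.
  have nB : \forall y \near within (cube I p.+1) (nbhs z), forall i, iter k F y ord0 i < Us.
    apply: filter_forall => i.
    exact: (cvgr_lt _ (@cont_iter _ _ _ _ _ G k i z cz)).
  have GA : \forall n \near \oo, cube I p.+1 (iter n F x) /\ Us <= vmax (iter k F (iter n F x)).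
    apply: filterE => n; split; first exact: (it_cube G n cx).
    by rewrite itD; apply: UsU.
  have [y [[cy Ay] By]] := clz (fun y => cube I p.+1 y /\ Us <= vmax (iter k F y)) _ GA nB.
  by have := le_lt_trans Ay (By cy _); rewrite ltxx.
have Hd : forall k, exists i, iter k F z ord0 i <= Ls.
  move=> k; case: (pselect (exists i, iter k F z ord0 i <= Ls)) => // Hn; exfalso.
  have Hlt : forall i, Ls < iter k F z ord0 i.
    by move=> i; rewrite ltNge; apply/negP => H; apply: Hn; exists i.
  have nB : \forall y \near within (cube I p.+1) (nbhs z), forall i, Ls < iter k F y ord0 i.
    apply: filter_forall => i.
    exact: (cvgr_gt _ (@cont_iter _ _ _ _ _ G k i z cz)).
  have GA : \forall n \near \oo, cube I p.+1 (iter n F x) /\ vmin (iter k F (iter n F x)) <= Ls.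
    apply: filterE => n; split; first exact: (it_cube G n cx).
    by rewrite itD; apply: LsL.
  have [y [[cy Ay] By]] := clz (fun y => cube I p.+1 y /\ vmin (iter k F y) <= Ls) _ GA nB.
  by have := lt_le_trans (By cy _) Ay; rewrite ltxx.
have [r0 [K HK]] := g_walk G.
have [i1 Hi1] := Hc K.
have [i2 Hi2] := Hd K.
have zU : z ord0 r0 = Us.
  apply: (walk_up G cz (fun j => Ha 0%N j) _ (HK i1)).
  by apply/eqP; rewrite eq_le Ha Hi1.
have zL : z ord0 r0 = Ls.
  apply: (walk_lo G cz (fun j => Hb 0%N j) _ (HK i2)).
  by apply/eqP; rewrite eq_le Hb Hi2.
have UL : Ls = Us by rewrite -zU -zL.
rewrite -UL in HU *.
split => //.
- by move=> n; rewrite LsL; rewrite UL UsU.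
- move=> i; apply: (squeeze_cvgr _ HL HU).
  apply: filterE => n; apply/andP; split; [exact: vmin_le | exact: vmax_ge].
Qed.

Definition Kf {R : realType} {p} (F : 'rV[R]_p.+1 -> 'rV[R]_p.+1) x := limn (Useq F x).

Lemma K_mean (R : realType) I p F e (G : @good R I p F e) : is_mean I (Kf F).
Proof.
move=> x cx; have [H _ _ _] := main_cvg G cx.
have /andP [a b] := H 0%N; rewrite /Lseq /Useq /= in a b.
split; first by apply: (g_int G _ _ (H 0%N)); rewrite /Lseq /Useq /vmin /vmax; apply: cx.
by split; [exists (Order.arg_min ord0 xpredT (fun i => x ord0 i)) |
           exists (Order.arg_max ord0 xpredT (fun i => x ord0 i))].
Qed.

Lemma K_inv (R : realType) I p F e (G : @good R I p F e) x :
  cube I p.+1 x -> Kf F (F x) = Kf F x.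
Proof.
move=> cx; have [_ HU _ _] := main_cvg G cx.
rewrite /Kf; apply: cvg_lim => //.
have -> : Useq F (F x) = (fun n => Useq F x n.+1).
  by apply: funext => n; rewrite /Useq iterSr.
by rewrite (cvg_shiftS (Useq F x)).
Qed.

Lemma K_cvg (R : realType) I p F e (G : @good R I p F e) x :
  cube I p.+1 x -> (fun n => iter n F x) @ \oo --> \row_(i < p.+1) Kf F x.
Proof.
move=> cx; have [_ _ _ Hi] := main_cvg G cx.
by apply: cvg_rowP => j; rewrite mxE; apply: Hi.
Qed.

Lemma K_cont (R : realType) I p F e (G : @good R I p F e) :
  {within cube I p.+1, continuous (Kf F)}.
Proof.
apply/subspace_continuousP => x cx.
apply/cvgrPdist_lt => eps eps0.
have [_ HU HL _] := main_cvg G cx.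
have e2 : 0 < eps / 2 by rewrite divr_gt0.
have H1 : \forall n \near \oo, Useq F x n < Kf F x + eps / 2.
  by apply: (cvgr_lt _ HU); rewrite ltrDl.
have H2 : \forall n \near \oo, Kf F x - eps / 2 < Lseq F x n.
  by apply: (cvgr_gt _ HL); rewrite gtrDl oppr_lt0.
have H12 : \forall n \near \oo, Useq F x n < Kf F x + eps / 2 /\ Kf F x - eps / 2 < Lseq F x n.
  by apply: filterS2 H1 H2 => n a b; split.
have [N _ HN] := H12.
have [HN1 HN2] := HN N (leqnn N).
have Hy : \forall y \near within (cube I p.+1) (nbhs x),
    forall i, `|iter N F x ord0 i - iter N F y ord0 i| < eps / 2.
  apply: filter_forall => i.
  by move/cvgrPdist_lt: (@cont_iter _ _ _ _ _ G N i x cx) => /(_ _ e2).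
apply: filterS2 (withinT _ _) Hy => y cy Hy.
have [Hb _ _ _] := main_cvg G cy.
have /andP [b1 b2] := Hb N.
have u1 := Hy (Order.arg_max ord0 xpredT (fun i => iter N F y ord0 i)).
have u2 := Hy (Order.arg_min ord0 xpredT (fun i => iter N F y ord0 i)).
have v1 := vmax_ge (iter N F x) (Order.arg_max ord0 xpredT (fun i => iter N F y ord0 i)).
have v2 := vmin_le (iter N F x) (Order.arg_min ord0 xpredT (fun i => iter N F y ord0 i)).
rewrite /Useq /Lseq /vmax /vmin in b1 b2 HN1 HN2 v1 v2.
rewrite ltr_norml in u1; rewrite ltr_norml in u2.
move: u1 u2 => /andP [u1 u1'] /andP [u2 u2'].
rewrite /from_subspace /Kf /Useq /vmax in HN1 HN2 *.
rewrite ltr_norml; apply/andP; split; lra.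
Qed.

Lemma K_local (R : realType) I p F e (G : @good R I p F e) (S : {set 'I_p.+1}) r0 :
  r0 \in S ->
  (forall (z z' : 'rV[R]_p.+1) i, (forall j, e j i -> z ord0 j = z' ord0 j) -> F z ord0 i = F z' ord0 i) ->
  (forall u v, e u v -> v \in S -> u \in S) ->
  forall x x', cube I p.+1 x -> cube I p.+1 x' ->
  (forall i, i \in S -> x ord0 i = x' ord0 i) -> Kf F x = Kf F x'.
Proof.
move=> Hr0 Hloc Hcl x x' cx cx' Hxx.
have Hn : forall n i, i \in S -> iter n F x ord0 i = iter n F x' ord0 i.
  elim=> [|n IH] i iS //=; first exact: Hxx.
  by apply: Hloc => j eji; apply: IH; apply: Hcl eji iS.
have [_ _ _ H1] := main_cvg G cx; have [_ _ _ H2] := main_cvg G cx'.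
have E : (fun n => iter n F x ord0 r0) = (fun n => iter n F x' ord0 r0).
  by apply: funext => n; apply: Hn.
have H1' := H1 r0; rewrite E in H1'.
exact: (cvg_unique _ H1' (H2 r0)).
Qed.

Lemma Malpha_E (R : realType) p (d : 'I_p -> nat) (alpha : forall i : 'I_p, 'I_(d i) -> 'I_p)
  (M : forall i : 'I_p, 'rV[R]_(d i) -> R) z i :
  Malpha alpha M z ord0 i = M i (\row_(j < d i) z ord0 (alpha i j)).
Proof. by rewrite /Malpha mxE. Qed.

Lemma sel_cube (R : realType) (I : set R) p (d : 'I_p -> nat)
  (alpha : forall i : 'I_p, 'I_(d i) -> 'I_p) z i :
  cube I p z -> cube I (d i) (\row_(j < d i) z ord0 (alpha i j)).
Proof. by move=> cz j; rewrite mxE; apply: cz. Qed.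
Arguments sel_cube {R I p d} alpha {z} i _.

Lemma good_Malpha (R : realType) (I : set R) p (d : 'I_p.+1 -> nat)
  (alpha : forall i : 'I_p.+1, 'I_(d i) -> 'I_p.+1)
  (M : forall i : 'I_p.+1, 'rV[R]_(d i) -> R) :
  is_interval I -> (forall i, is_mean I (M i)) ->
  (forall i, {within cube I (d i), continuous (M i)}) ->
  (forall i, is_strict_mean I (M i)) ->
  (exists r0 K, forall i, walk (inc_edge alpha) K r0 i) ->
  good I (Malpha alpha M) (inc_edge alpha).
Proof.
move=> Hint Hmean Hcont Hstrict Hwalk; split => //.
- move=> z cz i; rewrite Malpha_E.
  by have [] := Hmean i _ (sel_cube alpha i cz).
- move=> z i cz; rewrite Malpha_E.
  have [_ [[j Hj] [j' Hj']]] := Hmean i _ (sel_cube alpha i cz).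
  move: Hj Hj'; rewrite !mxE => Hj Hj'.
  by split; [exists (alpha i j') | exists (alpha i j)].
- move=> z b i cz Hb; rewrite Malpha_E => HM j /existsP [k /eqP ak].
  set y := \row_(j < d i) z ord0 (alpha i j) in HM.
  have yb : forall k, y ord0 k <= b by move=> k'; rewrite mxE.
  have cst : forall k k', y ord0 k = y ord0 k'.
    move=> k1 k2; apply/eqP; case: (boolp.pselect (nonconstant y)) => [nc|nc].
      have [_ Hs] := Hstrict i; have [_ [k3 Hk3]] := Hs y (sel_cube alpha i cz) nc.
      by have := lt_le_trans Hk3 (yb k3); rewrite HM ltxx.
    by case: (y ord0 k1 =P y ord0 k2) => // ne; exfalso; apply: nc; exists k1, k2; apply/eqP.
  have [_ [_ [k3 Hk3]]] := Hmean i _ (sel_cube alpha i cz).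
  have yk3 : y ord0 k3 = b by apply/eqP; rewrite eq_le yb -HM Hk3.
  by rewrite -ak -yk3 (cst k3 k) mxE.
- move=> z b i cz Hb; rewrite Malpha_E => HM j /existsP [k /eqP ak].
  set y := \row_(j < d i) z ord0 (alpha i j) in HM.
  have yb : forall k, b <= y ord0 k by move=> k'; rewrite mxE.
  have cst : forall k k', y ord0 k = y ord0 k'.
    move=> k1 k2; apply/eqP; case: (boolp.pselect (nonconstant y)) => [nc|nc].
      have [_ Hs] := Hstrict i; have [[k3 Hk3] _] := Hs y (sel_cube alpha i cz) nc.
      by have := le_lt_trans (yb k3) Hk3; rewrite HM ltxx.
    by case: (y ord0 k1 =P y ord0 k2) => // ne; exfalso; apply: nc; exists k1, k2; apply/eqP.
  have [_ [[k3 Hk3] _]] := Hmean i _ (sel_cube alpha i cz).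
  have yk3 : y ord0 k3 = b by apply/eqP; rewrite eq_le yb -HM Hk3 andbT.
  by rewrite -ak -yk3 (cst k3 k) mxE.
- move=> i z cz.
  have -> : (fun y => Malpha alpha M y ord0 i) =
            (fun y => M i (\row_(j < d i) y ord0 (alpha i j))).
    by apply: funext => y; rewrite Malpha_E.
  pose sel := fun y : 'rV[R]_p.+1 => \row_(j < d i) y ord0 (alpha i j).
  have Hs : sel @ within (cube I p.+1) (nbhs z) -->
            within (cube I (d i)) (nbhs (sel z)).
    move=> B HB.
    have Hv : sel @ within (cube I p.+1) (nbhs z) --> sel z.
      apply: cvg_rowP => j; rewrite mxE.
      have -> : (fun t => sel t ord0 j) = (fun t : 'rV[R]_p.+1 => t ord0 (alpha i j)).
        by apply: funext => t; rewrite mxE.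
      by apply: cvg_within_filter; apply: coord_cvg.
    have H1 := Hv _ HB.
    have H2 : \forall y \near within (cube I p.+1) (nbhs z), cube I (d i) (sel y).
      by apply: filterS (withinT _ _) => y; apply: sel_cube.
    by apply: filterS2 H2 H1 => y c h; apply: h c.
  have Hc := (subspace_continuousP _ _).1 (Hcont i) (sel z) (sel_cube alpha i cz).
  rewrite Malpha_E; exact: cvg_trans (cvg_app (M i) Hs) Hc.
Qed.

Unset Implicit Arguments.

Theorem theorem3p1 (R : realType) (I : set R) (p : nat) (d : 'I_p -> nat)
  (alpha : forall i : 'I_p, 'I_(d i) -> 'I_p)
  (M : forall i : 'I_p, 'rV[R]_(d i) -> R) :
  is_interval I ->
  (0 < p)%N ->
  (forall i, 0 < d i)%N ->
  (forall i, is_mean I (M i)) ->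
  ergodic_on (inc_edge alpha) (root_set (inc_edge alpha)) ->
  (forall i, {within cube I (d i), continuous (M i)}) ->
  (forall i, is_strict_mean I (M i)) ->
  exists K : 'rV[R]_p -> R,
    [/\ {within cube I p, continuous K},
        is_mean I K,
        (forall x, cube I p x -> K (Malpha alpha M x) = K x)
      & (forall x, cube I p x ->
           (fun n => iter n (Malpha alpha M) x) @ \oo --> (\row_(i < p) K x))] /\
    (exists Kstar : 'rV[R]_(#|root_set (inc_edge alpha)|) -> R,
           is_mean I Kstar /\
           forall x, cube I p x ->
             K x = Kstar (\row_j x ord0 (enum_val j))) /\
    (forall K' : 'rV[R]_p -> R,
           {within cube I p, continuous K'} ->
           is_mean I K' ->
           (forall x, cube I p x -> K' (Malpha alpha M x) = K' x) ->
           (forall x, cube I p x ->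
              (fun n => iter n (Malpha alpha M) x) @ \oo --> (\row_(i < p) K' x)) ->
           forall x, cube I p x -> K' x = K x).
Proof.
case: p d alpha M => [|p] d alpha M Hint Hp Hd Hmean Herg Hcont Hstrict //.
have [r0 [K [Hr0 HK]]] := root_walk Herg.
have G : good I (Malpha alpha M) (inc_edge alpha).
  by apply: good_Malpha => //; exists r0, K.
have Hloc : forall (z z' : 'rV[R]_p.+1) i,
    (forall j, inc_edge alpha j i -> z ord0 j = z' ord0 j) ->
    Malpha alpha M z ord0 i = Malpha alpha M z' ord0 i.
  move=> z z' i H; rewrite !Malpha_E; congr (M i _); apply/rowP => k.
  by rewrite !mxE; apply: H; apply/existsP; exists k.
have Hcl : forall u v, inc_edge alpha u v -> v \in root_set (inc_edge alpha) ->
    u \in root_set (inc_edge alpha) by move=> u v; apply: root_closed.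
exists (Kf (Malpha alpha M)).
split; [split|split].
- exact: (K_cont G).
- exact: (K_mean G).
- by move=> x cx; exact: (K_inv G cx).
- by move=> x cx; exact: (K_cvg G cx).
- exists (fun y => Kf (Malpha alpha M) (\row_i y ord0 (enum_rank_in Hr0 i))).
  split.
  + move=> y cy.
    have cext : cube I p.+1 (\row_i y ord0 (enum_rank_in Hr0 i)).
      by move=> i; rewrite mxE; apply: cy.
    have [H1 [[j Hj] [j' Hj']]] := K_mean G cext.
    move: Hj Hj'; rewrite !mxE => Hj Hj'.
    by split => //; split; [exists (enum_rank_in Hr0 j) | exists (enum_rank_in Hr0 j')].
  + move=> x cx; apply: (K_local G Hr0 Hloc Hcl cx).
      by move=> i; rewrite !mxE; apply: cx.
    by move=> i iS; rewrite !mxE enum_rankK_in.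
- move=> K' _ _ _ HK' x cx.
  have h1 := HK' x cx; have h2 := K_cvg G cx.
  have E : \row_(i < p.+1) K' x = \row_(i < p.+1) Kf (Malpha alpha M) x.
    exact: (cvg_unique _ h1 h2).
  have := congr1 (fun v : 'rV[R]_p.+1 => v ord0 ord0) E.
  by rewrite /= !mxE.
Qed.
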